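(* Let $V$ be a finite vocabulary. Each word $x\in V$ has a synonym set $S_x\subseteq V$ with $x\in S_x$, the synonym relation being symmetric, and a nonempty perturbation set $P_x\subseteq V$. Fix $L\ge1$, $0\le R\le L$, a finite label set $\mathcal{Y}$ and a classifier $f:V^L\to\mathcal{Y}$. For $X=x_1,\ldots,x_L\in V^L$ let $S_X=\{X'\in V^L: \sum_i\mathbb{I}\{x'_i\ne x_i\}\le R,\ x'_i\in S_{x_i}\ \forall i\}$, $\Pi_X(Z)=\prod_{i=1}^L\mathbb{I}\{z_i\in P_{x_i}\}/|P_{x_i}|$, $g^{\mathrm{RS}}(X,c)=\mathbb{P}_{Z\sim\Pi_X}(f(Z)=c)$, and, with $\mathcal{H}_{[0,1]}$ the set of all functions $h:V^L\to[0,1]$ and $\Pi_X[h]=\mathbb{E}_{Z\sim\Pi_X}[h(Z)]$, $$g^{\mathrm{RS}}_{low}(X,c)=\min_{h\in\mathcal{H}_{[0,1]}}\min_{X'\in S_X}\{\Pi_{X'}[h]:\Pi_X[h]=g^{\mathrm{RS}}(X,c)\},\quad g^{\mathrm{RS}}_{up}(X,c)=\max_{h\in\mathcal{H}_{[0,1]}}\max_{X'\in S_X}\{\Pi_{X'}[h]:\Pi_X[h]=g^{\mathrm{RS}}(X,c)\}.$$ Assume $|P_x|=|P_{x'}|$ for every word $x$ and every $x'\in S_x$. Let $q_x=\min_{x'\in S_x}|P_x\cap P_{x'}|/|P_x|$, and for a sentence $X$ order its positions $i_1,\ldots,i_L$ so that $q_{x_{i_1}}\le\cdots\le q_{x_{i_L}}$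 and put $q_X=1-\prod_{j=1}^R q_{x_{i_j}}$. Then for all $X$ and $c\in\mathcal{Y}$, $$g^{\mathrm{RS}}_{low}(X,c)\ge\max\big(g^{\mathrm{RS}}(X,c)-q_X,0\big),\qquad g^{\mathrm{RS}}_{up}(X,c)\le\min\big(g^{\mathrm{RS}}(X,c)+q_X,1\big).$$ *)

(* Defs.v *)
From HB Require Import structures.
From mathcomp Require Import all_boot all_order all_algebra.
From mathcomp Require Import classical_sets reals.
Set Implicit Arguments. Unset Strict Implicit. Unset Printing Implicit Defensive.
Import Order.TTheory GRing.Theory Num.Theory.
Local Open Scope ring_scope.
Local Open Scope classical_set_scope.

Section Defs.
Variables (R : realType) (V : finType) (L : nat).

Definition sentence := {ffun 'I_L -> V}.

Variable P : V -> {set V}.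
Variable S : V -> {set V}.

Definition PiX (X Z : sentence) : R :=
  \prod_(i < L) ((Z i \in P (X i))%:R / #|P (X i)|%:R).

Definition PiE (X : sentence) (h : sentence -> R) : R :=
  \sum_(Z : sentence) PiX X Z * h Z.

Definition gRS (Y : finType) (f : sentence -> Y) (X : sentence) (c : Y) : R :=
  \sum_(Z : sentence) PiX X Z * (f Z == c)%:R.

Definition SX (Rad : nat) (X : sentence) : {set sentence} :=
  [set X' : sentence | (#|[set i : 'I_L | X' i != X i]| <= Rad)%N
                       && [forall i : 'I_L, X' i \in S (X i)]].

Definition H01 (h : sentence -> R) : Prop := forall Z, 0 <= h Z <= 1.

Definition feasible_vals (Y : finType) (f : sentence -> Y) (Rad : nat)
  (X : sentence) (c : Y) : set R :=
  [set v | exists h, H01 h /\ exists X', X' \in SX Rad X /\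
                     PiE X h = gRS f X c /\ v = PiE X' h].

(* min / max over h and X' (attained; we use inf / sup of the value set) *)
Definition g_low Y f Rad X c : R := inf (@feasible_vals Y f Rad X c).
Definition g_up Y f Rad X c : R := sup (@feasible_vals Y f Rad X c).

(* q_x = min_{x' in S_x} |P_x \cap P_x'| / |P_x|  (S_x is nonempty since x in S_x,
   and all values are <= 1, so folding min from 1 gives the minimum) *)
Definition qx (x : V) : R :=
  \big[Order.min/1]_(x' in S x) (#|P x :&: P x'|%:R / #|P x|%:R).

Definition qX (Rad : nat) (X : sentence) : R :=
  1 - \prod_(q <- take Rad (sort <=%R [seq qx (X i) | i <- enum 'I_L])) q.

End Defs.

(* Main.v *)
Require Import Defs.
From mathcomp Require Import all_boot all_order all_algebra.
From mathcomp Require Import classical_sets reals boolp.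
From mathcomp Require Import zify.
Import Order.TTheory GRing.Theory Num.Theory.
Local Open Scope ring_scope.
From mathcomp Require Import lra.
Lemma prod01 (R : realType) (s : seq R) :
  all (fun x => 0 <= x <= 1) s -> 0 <= \prod_(q <- s) q <= 1.
Proof.
elim: s => [|a s IH]; first by rewrite big_nil ler01 lexx.
rewrite /= big_cons => /andP[/andP[a0 a1] /IH /andP[p0 p1]].
by rewrite mulr_ge0 // mulr_ile1.
Qed.

Lemma sorted_take_prod (R : realType) (t u w : seq R) k :
  sorted <=%R t -> all (fun x => 0 <= x <= 1) t -> perm_eq t (u ++ w) ->
  (size u <= k)%N ->
  \prod_(q <- take k t) q <= \prod_(q <- u) q.
Proof.
elim: t u w k => [|a t IH] u w k srt a01 pe su.
  have := perm_size pe; rewrite size_cat /=.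
  by case: u pe su => //= _ _ _; rewrite !big_nil.
case: k su => [|k] su.
  by case: u pe su => //= _ _; rewrite !big_nil.
rewrite /= big_cons.
move: (a01) => /= /andP[/andP[a0 a1] t01].
have st : sorted <=%R t by exact: path_sorted srt.
have amin : all (fun x => a <= x) t.
  by apply: (order_path_min (@le_trans _ R)).
have u01 : forall x, x \in u -> 0 <= x <= 1.
  move=> x xu; have : x \in a :: t by rewrite (perm_mem pe) mem_cat xu.
  by move/allP: a01 => H /H.
case: u pe su u01 => [|b u0] pe su u01.
  have tk01 : all (fun x => 0 <= x <= 1) (take k t).
    by apply/allP=> x /mem_take xt; move/allP: t01; apply.
  have /andP[p0 p1] := @prod01 R _ tk01.
  by rewrite big_nil mulr_ile1.
have : a \in (b :: u0) ++ w by rewrite -(perm_mem pe) mem_head.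
rewrite mem_cat => /orP[au|aw].
  have pu := perm_to_rem au.
  have pt : perm_eq t (rem a (b :: u0) ++ w).
    rewrite -(perm_cons a); apply: (perm_trans pe).
    by rewrite -cat_cons perm_cat2r.
  have := IH _ _ k st t01 pt.
  rewrite size_rem //= => /(_ su) H.
  rewrite (perm_big _ pu) big_cons.
  by rewrite ler_wpM2l.
have pw := perm_to_rem aw.
have pt : perm_eq t (u0 ++ b :: rem a w).
  rewrite -(perm_cons a); apply: (perm_trans pe).
  apply/permP => p /=; rewrite !count_cat /= (permP pw) /=.
  lia.
have := IH _ _ k st t01 pt.
move: su; rewrite /= ltnS => su /(_ su) H.
have bt : b \in t by rewrite (perm_mem pt) mem_cat mem_head orbT.
have ab : a <= b by move/allP: amin => /(_ _ bt).
have u00 : 0 <= \prod_(q <- u0) q.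
  have u0_01 : all (fun x => 0 <= x <= 1) u0.
    by apply/allP => x xu; apply: u01; rewrite inE xu orbT.
  by have /andP[] := @prod01 R u0 u0_01.
rewrite big_cons (le_trans (ler_wpM2l a0 H)) //.
by rewrite ler_wpM2r.
Qed.

Lemma size_filter_card (T : finType) (p : pred T) :
  size (filter p (enum T)) = #|[set i | p i]|.
Proof.
rewrite cardsE -sum1_card -sum1_size big_filter big_enum_cond.
by apply: eq_bigl => i.
Qed.

Lemma sum_prod_ind (R : realType) (V : finType) (L : nat)
  (A : 'I_L -> {set V}) (n : 'I_L -> R) :
  \sum_(Z : sentence V L) \prod_(i < L) ((Z i \in A i)%:R / n i) =
  \prod_(i < L) (#|A i|%:R / n i).
Proof.
have -> : \prod_(i < L) (#|A i|%:R / n i) =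
    \prod_(i < L) \sum_(j : V) ((j \in A i)%:R / n i).
  apply: eq_bigr => i _; rewrite -mulr_suml; congr (_ / _).
  have -> : \sum_(j : V) ((j \in A i)%:R : R) = \sum_(j in A i) (1 : R).
    by rewrite [RHS]big_mkcond /=; apply: eq_bigr => j _; case: (j \in A i).
  by rewrite sumr_const.
by rewrite bigA_distr_bigA.
Qed.

Lemma card_cset (T : finType) (p : pred T) :
  #|[set i | p i]%classic| = #|[set i | p i]|.
Proof. apply: eq_card => i; rewrite [in RHS]inE. apply/idP/idP; rewrite in_setE //. Qed.

Lemma diff_bound (R : realType) (T : finType) (p1 p2 w h : T -> R) (r : R) :
  (forall z, w z <= p1 z) -> (forall z, w z <= p2 z) ->
  (forall z, 0 <= h z <= 1) -> \sum_z p1 z = 1 -> \sum_z w z = r ->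
  \sum_z p1 z * h z - \sum_z p2 z * h z <= 1 - r.
Proof.
move=> w1 w2 h01 s1 sw.
have E1 : \sum_z p1 z * h z = \sum_z (p1 z - w z) * h z + \sum_z w z * h z.
  by rewrite -big_split; apply: eq_bigr => z _ /=; rewrite mulrBl subrK.
have E2 : \sum_z p2 z * h z = \sum_z (p2 z - w z) * h z + \sum_z w z * h z.
  by rewrite -big_split; apply: eq_bigr => z _ /=; rewrite mulrBl subrK.
have G2 : 0 <= \sum_z (p2 z - w z) * h z.
  apply: sumr_ge0 => z _; apply: mulr_ge0; first by rewrite subr_ge0.
  by have /andP[] := h01 z.
have G1 : \sum_z (p1 z - w z) * h z <= \sum_z (p1 z - w z).
  apply: ler_sum => z _; have /andP[h0 h1] := h01 z.
  by rewrite ler_piMr // subr_ge0.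
have : \sum_z (p1 z - w z) = 1 - r by rewrite sumrB s1 sw.
rewrite E1 E2; move=> H; rewrite -H.
set a := \sum_z (p1 z - w z) * h z; set b := \sum_z (p2 z - w z) * h z.
set c := \sum_z w z * h z.
have -> : a + c - (b + c) = a - b by rewrite opprD addrACA subrr addr0.
by rewrite lerBlDr (le_trans G1) // lerDl.
Qed.

Theorem theorem3 (R : realType) (V : finType) (L Rad : nat) (Y : finType)
  (S P : V -> {set V}) (f : sentence V L -> Y)
  (hL : (1 <= L)%N) (hRad : (Rad <= L)%N)
  (hSrefl : forall x, x \in S x)
  (hSsym : forall x y, y \in S x -> x \in S y)
  (hPne : forall x, (0 < #|P x|)%N)
  (hPcard : forall x x', x' \in S x -> #|P x| = #|P x'|) :
  forall (X : sentence V L) (c : Y),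
    Num.max (gRS R P f X c - qX R P S Rad X) 0 <= g_low R P S f Rad X c /\
    g_up R P S f Rad X c <= Num.min (gRS R P f X c + qX R P S Rad X) 1.
Proof.
move=> X c.
have n0 : forall x, (#|P x|%:R : R) != 0.
  by move=> x; rewrite pnatr_eq0 -lt0n hPne.
have n0' : forall x, 0 < (#|P x|%:R : R) by move=> x; rewrite ltr0n.
have sum1 : forall Y : sentence V L, \sum_Z PiX R P Y Z = 1.
  move=> Y0; rewrite /PiX.
  rewrite (@sum_prod_ind R V L (fun i => P (Y0 i)) (fun i => (#|P (Y0 i)|%:R : R))).
  by apply: big1 => i _; exact: divff.
have PiX0 : forall Y0 Z : sentence V L, 0 <= PiX R P Y0 Z.
  by move=> Y0 Z; rewrite /PiX; apply: prodr_ge0 => i _; rewrite divr_ge0 // ler0n.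
have q01 : forall x, 0 <= qx R P S x <= 1.
  move=> x; rewrite /qx; apply: (big_ind (fun v => 0 <= v <= 1)).
  - by rewrite ler01 lexx.
  - move=> a b /andP[a0 a1] /andP[b0 b1].
    by rewrite le_min a0 b0 ge_min a1.
  - move=> x' _; rewrite divr_ge0 ?ler0n //= ler_pdivrMr // mul1r ler_nat.
    by rewrite subset_leq_card // subsetIl.
have qle : forall x x', x' \in S x ->
    qx R P S x <= #|P x :&: P x'|%:R / #|P x|%:R.
  by move=> x x' h; rewrite /qx (bigD1 x') //= ge_min lexx.
have key : forall X', X' \in SX S Rad X -> forall h, H01 h ->
    PiE P X' h - PiE P X h <= qX R P S Rad X /\
    PiE P X h - PiE P X' h <= qX R P S Rad X.
  move=> X'; rewrite inE => /andP[hcard /forallP hS] h hh.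
  set r := \prod_(i < L) (#|P (X i) :&: P (X' i)|%:R / (#|P (X i)|%:R : R)).
  have r_ge : \prod_(i < L | X' i != X i) qx R P S (X i) <= r.
    rewrite /r [Q in _ <= Q](bigID (fun i => X' i != X i)) /=.
    rewrite [Q in _ * Q]big1 ?mulr1; last first.
      by move=> i; rewrite negbK => /eqP ->; rewrite finset.setIid divff.
    apply: ler_prod => i _; have /andP[q0 _] := q01 (X i).
    by rewrite q0 /=; exact: qle.
  have sq : \prod_(q <- take Rad (sort <=%R [seq qx R P S (X i) | i <- enum 'I_L])) q
            <= \prod_(i < L | X' i != X i) qx R P S (X i).
    pose pr := (fun i : 'I_L => X' i != X i).
    have := @sorted_take_prod R
      (sort <=%R [seq qx R P S (X i) | i <- enum 'I_L])
      [seq qx R P S (X i) | i <- filter pr (enum 'I_L)]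
      [seq qx R P S (X i) | i <- filter (predC pr) (enum 'I_L)] Rad.
    move=> /(_ (sort_le_sorted _)).
    have a01 : all (fun x => 0 <= x <= 1)
        (sort <=%R [seq qx R P S (X i) | i <- enum 'I_L]).
      by rewrite all_sort; apply/allP => x /mapP[i _ ->]; exact: q01.
    move=> /(_ a01).
    have pe : perm_eq (sort <=%R [seq qx R P S (X i) | i <- enum 'I_L])
       ([seq qx R P S (X i) | i <- filter pr (enum 'I_L)] ++
        [seq qx R P S (X i) | i <- filter (predC pr) (enum 'I_L)]).
      rewrite perm_sort -map_cat; apply: perm_map.
      by rewrite perm_sym perm_filterC.
    move=> /(_ pe).
    rewrite size_map size_filter_card -card_cset => /(_ hcard).
    rewrite big_map big_filter big_enum_cond.
    done.
  set w := fun Z : sentence V L => \prod_(i < L)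
      ((Z i \in P (X i) :&: P (X' i))%:R / (#|P (X i)|%:R : R)).
  have sw : \sum_Z w Z = r.
    by rewrite /w (@sum_prod_ind R V L (fun i => P (X i) :&: P (X' i))
                  (fun i => (#|P (X i)|%:R : R))).
  have wX : forall Z, w Z <= PiX R P X Z.
    move=> Z; apply: ler_prod => i _.
    rewrite divr_ge0 ?ler0n //= ler_wpM2r ?invr_ge0 ?ler0n // ler_nat inE.
    by case: (Z i \in P (X i)); case: (Z i \in P (X' i)).
  have wX' : forall Z, w Z <= PiX R P X' Z.
    move=> Z; apply: ler_prod => i _.
    rewrite -(hPcard _ _ (hS i)).
    rewrite divr_ge0 ?ler0n //= ler_wpM2r ?invr_ge0 ?ler0n // ler_nat inE.
    by case: (Z i \in P (X i)); case: (Z i \in P (X' i)).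
  have rq : 1 - r <= qX R P S Rad X.
    rewrite /qX lerD2l lerN2; exact: le_trans sq r_ge.
  split; apply: le_trans rq.
  - exact: (@diff_bound R _ _ _ _ h r wX' wX hh (sum1 X') sw).
  - exact: (@diff_bound R _ _ _ _ h r wX wX' hh (sum1 X) sw).
have ne : (feasible_vals (R:=R) P S f Rad X c !=set0)%classic.
  exists (PiE P X (fun Z => ((f Z == c)%:R : R))).
  exists (fun Z => ((f Z == c)%:R : R)); split.
    by move=> Z; case: (f Z == c); rewrite ?lexx ?ler01.
  exists X; split; last by split.
  rewrite inE; apply/andP; split.
    by rewrite card_cset eq_card0 // => i; rewrite inE eqxx.
  by apply/forallP => i; exact: hSrefl.
have bnds : forall v, feasible_vals (R:=R) P S f Rad X c v ->
    [/\ gRS R P f X c - qX R P S Rad X <= v, 0 <= v,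
        v <= gRS R P f X c + qX R P S Rad X & v <= 1].
  move=> v [h [hh [X' [hX' [hg ->]]]]].
  have [k1 k2] := key X' hX' h hh.
  rewrite hg in k1 k2.
  have v0 : 0 <= PiE P X' h.
    apply: sumr_ge0 => Z _; apply: mulr_ge0 => //.
    by have /andP[] := hh Z.
  have v1 : PiE P X' h <= 1.
    rewrite -(sum1 X'); apply: ler_sum => Z _.
    have /andP[h0 h1] := hh Z; by rewrite ler_piMr.
  split => //; lra.
split.
  rewrite /g_low; apply: (lb_le_inf ne); move=> v hv.
  have [a b _ _] := bnds v hv.
  by rewrite ge_max a b.
rewrite /g_up; apply: (ge_sup ne); move=> v hv.
have [_ _ a b] := bnds v hv.
by rewrite le_min a b.
Qed.
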